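(* If $\beta:[r]\to[2n]$ is qubit-injective, then $T_{TCR}(\beta)$ is transitive and closed under reversal. If moreover $\beta':[s]\to[2n]$ ($s>r$) is qubit-injective and agrees with $\beta$ on $[r]$, then $T_{TCR}(\beta)\subseteq T_{TCR}(\beta')$.
   Context: $[N]=\{1,\dots,N\}$. $Q_n(i)=\min(i,2n+1-i)$ for $i\in[2n]$; $\beta:[r]\to[2n]$ is qubit-injective if $Q_n\circ\beta:[r]\to[n]$ is injective. $T_M(\beta)=\{(i,j): i\in\mathrm{Im}(\beta),\ j\in[2n],\ j<i,\ Q_n(j)\notin\{Q_n(\beta(1)),\dots,Q_n(\beta(\beta^{-1}(i)-1))\}\}$; $T_{MR}(\beta)=\{(i,j):(2n+1-j,2n+1-i)\in T_M(\beta)\}$; $T_{TCR}(\beta)=T_M(\beta)\cup T_{MR}(\beta)$. A set $T$ of pairs is transitive if $(i,j),(j,k)\in T\Rightarrow(i,k)\in T$, and closed under reversal if $(i,j)\in T\iff(2n+1-j,2n+1-i)\in T$. *)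

(* Defs.v *)
From mathcomp Require Import all_boot.
Set Implicit Arguments. Unset Strict Implicit. Unset Printing Implicit Defensive.

(* [N] = {1,...,N}; a map beta : [r] -> [2n] is a function nat -> nat whose
   values on 1..r lie in 1..2n (values outside [r] are irrelevant). *)

Definition Q (n i : nat) : nat := minn i (n.*2.+1 - i).

Definition maps_into (n r : nat) (beta : nat -> nat) : Prop :=
  forall k, 1 <= k <= r -> 1 <= beta k <= n.*2.

Definition qubit_injective (n r : nat) (beta : nat -> nat) : Prop :=
  forall k l, 1 <= k <= r -> 1 <= l <= r ->
    Q n (beta k) = Q n (beta l) -> k = l.

(* T_M(beta): (i,j) with i in Im(beta), j in [2n], j < i and
   Q_n(j) not in {Q_n(beta 1), ..., Q_n(beta (beta^-1(i) - 1))}.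
   Here k plays the role of beta^-1(i) (unique since beta is injective). *)
Definition T_M (n r : nat) (beta : nat -> nat) (i j : nat) : Prop :=
  exists k, [/\ 1 <= k <= r, beta k = i, 1 <= j <= n.*2, j < i &
    forall m, 1 <= m < k -> Q n j <> Q n (beta m)].

Definition T_MR (n r : nat) (beta : nat -> nat) (i j : nat) : Prop :=
  T_M n r beta (n.*2.+1 - j) (n.*2.+1 - i).

Definition T_TCR (n r : nat) (beta : nat -> nat) (i j : nat) : Prop :=
  T_M n r beta i j \/ T_MR n r beta i j.

Definition transitive_pairs (T : nat -> nat -> Prop) : Prop :=
  forall i j k, T i j -> T j k -> T i k.

Definition closed_under_reversal (n : nat) (T : nat -> nat -> Prop) : Prop :=
  forall i j, 1 <= i <= n.*2 -> 1 <= j <= n.*2 ->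
    (T i j <-> T (n.*2.+1 - j) (n.*2.+1 - i)).

(* Main.v *)
Require Import Defs.
From mathcomp Require Import all_boot.
From mathcomp Require Import zify.

Lemma QN n x : x <= n.*2.+1 -> Q n (n.*2.+1 - x) = Q n x.
Proof. rewrite /Q => H. lia. Qed.

Lemma MM n r b i j l : T_M n r b i j -> T_M n r b j l -> T_M n r b i l.
Proof.
move=> [k [Hk Hb Hj Hji Hq]] [k' [Hk' Hb' Hl Hlj Hq']].
exists k; split => //; first lia.
have Hkk : k <= k'.
  case: (leqP k k') => // Hlt.
  exfalso; apply: (Hq k'); first lia. by rewrite Hb'.
move=> m Hm; apply: Hq'; lia.
Qed.

Lemma mono n r s b b' i j : r < s ->
  (forall k, 1 <= k <= r -> b' k = b k) -> T_M n r b i j -> T_M n s b' i j.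
Proof.
move=> Hrs Hag [k [Hk Hb Hj Hji Hq]].
exists k; split => //; first lia.
  by rewrite Hag.
move=> m Hm; rewrite Hag; [exact: Hq | lia].
Qed.

Theorem lemma7 (n r : nat) (beta : nat -> nat) :
  maps_into n r beta -> qubit_injective n r beta ->
  [/\ transitive_pairs (T_TCR n r beta),
      closed_under_reversal n (T_TCR n r beta) &
      forall (s : nat) (beta' : nat -> nat), r < s ->
        maps_into n s beta' -> qubit_injective n s beta' ->
        (forall k, 1 <= k <= r -> beta' k = beta k) ->
        forall i j, T_TCR n r beta i j -> T_TCR n s beta' i j].
Proof.
move=> Hmap Hinj; split.
- move=> i j l [H1|H1] [H2|H2].
  + left; exact: MM H1 H2.
  +
    move: H1 H2 => [k [Hk Hb Hj Hji Hq]] [k' [Hk' Hb' Hl Hlj Hq']].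
    have Bk := Hmap k Hk. have Bk' := Hmap k' Hk'.
    case: (leqP k k') => Hkk.
    * left; exists k; split => //; try lia.
      move=> m Hm.
      have -> : Q n l = Q n (beta k') by rewrite Hb' QN //; lia.
      move=> /Hinj E; have := E Hk' ltac:(lia). lia.
    * right; exists k'; split => //; try lia.
      move=> m Hm.
      rewrite QN; last lia.
      rewrite -Hb.
      move=> /Hinj E; have := E Hk ltac:(lia). lia.
  +
    exfalso.
    move: H1 H2 => [k [Hk Hb Hj Hji Hq]] [k' [Hk' Hb' Hl Hlj Hq']].
    have Bk := Hmap k Hk. have Bk' := Hmap k' Hk'.
    have E : Q n (beta k') = Q n (beta k).
      by rewrite Hb Hb' QN //; lia.
    have := Hinj _ _ Hk' Hk E => Ek. subst k'. lia.
  + right; exact: MM H2 H1.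
- move=> i j Hi Hj; rewrite /T_TCR /T_MR.
  have -> : n.*2.+1 - (n.*2.+1 - i) = i by lia.
  have -> : n.*2.+1 - (n.*2.+1 - j) = j by lia.
  tauto.
- move=> s b' Hrs _ _ Hag i j [H|H]; [left|right]; exact: mono H.
Qed.
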